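(* Let $\mathfrak{S}$ be a labelled sequent. Any label phase started on $\mathfrak{S}$ terminates and yields a finite derivation (with root $\mathfrak{S}$) whose leaves are label saturated.
   Context: Formulas: fix a countable set $\mathtt{Prop}$ of propositional atoms; formulas are generated by $A ::= \bot \mid p \mid A \to A \mid \Box A \mid \triangle A$ with $p \in \mathtt{Prop}$. Labelled sequents: fix a countable set $\mathtt{Lab}$ of labels. A labelled formula is $x:A$ with $x\in\mathtt{Lab}$ and $A$ a formula; a relational atom is $xRy$ or $xSy$ with $x,y \in \mathtt{Lab}$. A sequent $\mathcal{R},\Gamma\Rightarrow\Omega$ consists of a finite multiset $\mathcal{R}$ of relational atoms and finite multisets $\Gamma,\Omega$ of labelled formulas; commas denote multiset union. Rules used (premiss above, conclusion below): ($\Box$R) from $\mathcal{R},xRy,\Gamma\Rightarrow y:A,\Omega$ infer $\mathcal{R},\Gamma\Rightarrow x:\Box A,\Omega$, provided $y$ does not occur in the conclusion; ($\triangle$R) from $\mathcal{R},xSy,\Gamma\Rightarrow y:A,\Omega$ infer $\mathcal{R},\Gamma\Rightarrow x:\triangle A,\Omega$, provided $y$ does not occur in the conclusion. Label phase: starting from a sequent, repeatedly apply the rules $\Box$R and $\triangle$R bottom-up to the leaves for as long as possible. A sequent is label saturated if neither $\Box$R nor $\triangle$R can be applied to it, i.e. its succedent $\Omega$ contains no labelled formula of the form $x:\Box A$ or $x:\triangle A$. *)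

(* Defs.v *)
From Stdlib Require Import List Permutation Relations.
Import ListNotations.

Definition atom := nat.
Definition label := nat.

Inductive form : Type :=
| Bot : form
| Var : atom -> form
| Imp : form -> form -> form
| Box : form -> form
| Tri : form -> form.

Definition lform : Type := (label * form)%type.

Inductive ratom : Type :=
| RAt : label -> label -> ratom
| SAt : label -> label -> ratom.

(* A sequent R, Gamma => Omega; finite multisets are represented by lists,
   considered up to permutation (see [step]). *)
Record sequent : Type := Seq {
  rels : list ratom;
  ant  : list lform;
  suc  : list lform
}.

Definition ratom_has (y : label) (r : ratom) : Prop :=
  match r with RAt a b | SAt a b => a = y \/ b = y end.

Definition occurs (y : label) (S : sequent) : Prop :=
  (exists r, In r (rels S) /\ ratom_has y r) \/
  (exists A, In (y, A) (ant S)) \/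
  (exists A, In (y, A) (suc S)).

Definition boxR_step (S S' : sequent) : Prop :=
  exists x y A Om,
    Permutation (suc S) ((x, Box A) :: Om) /\
    ~ occurs y S /\
    Permutation (rels S') (RAt x y :: rels S) /\
    Permutation (ant S') (ant S) /\
    Permutation (suc S') ((y, A) :: Om).

Definition triR_step (S S' : sequent) : Prop :=
  exists x y A Om,
    Permutation (suc S) ((x, Tri A) :: Om) /\
    ~ occurs y S /\
    Permutation (rels S') (SAt x y :: rels S) /\
    Permutation (ant S') (ant S) /\
    Permutation (suc S') ((y, A) :: Om).

(* A step of the label phase: S' is the premise of a BoxR or TriR
   application (read bottom-up) whose conclusion is S. *)
Definition step (S S' : sequent) : Prop := boxR_step S S' \/ triR_step S S'.

Definition label_saturated (S : sequent) : Prop :=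
  forall x A, ~ In (x, Box A) (suc S) /\ ~ In (x, Tri A) (suc S).

(* Main.v *)
Require Import Defs.
From Stdlib Require Import List Permutation Relations Lia Arith.
Import ListNotations.

Fixpoint fsize (A : form) : nat :=
  match A with
  | Bot => 1 | Var _ => 1
  | Imp A B => S (fsize A + fsize B)
  | Box A => S (fsize A) | Tri A => S (fsize A)
  end.

Fixpoint msr (l : list lform) : nat :=
  match l with [] => 0 | (_, A) :: t => fsize A + msr t end.

Lemma msr_perm : forall l l', Permutation l l' -> msr l = msr l'.
Proof.
  intros l l' H; induction H; simpl; try destruct x; try destruct y; lia.
Qed.

Lemma step_dec : forall S S', step S S' -> msr (suc S') < msr (suc S).
Proof.
  intros S S' [H|H]; destruct H as (x & y & A & Om & H1 & _ & _ & _ & H5);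
  rewrite (msr_perm _ _ H1), (msr_perm _ _ H5); simpl; lia.
Qed.

Lemma acc_all : forall n Q, msr (suc Q) < n -> Acc (fun S2 S1 => step S1 S2) Q.
Proof.
  induction n; intros Q H; [lia|].
  constructor; intros S2 Hs. apply IHn. pose proof (step_dec _ _ Hs). lia.
Qed.

Definition rmax (r : ratom) : nat := match r with RAt a b | SAt a b => max a b end.
Fixpoint rsmax (l : list ratom) : nat := match l with [] => 0 | r :: t => max (rmax r) (rsmax t) end.
Fixpoint lsmax (l : list lform) : nat := match l with [] => 0 | (x,_) :: t => max x (lsmax t) end.

Lemma rsmax_in : forall l r y, In r l -> ratom_has y r -> y <= rsmax l.
Proof.
  induction l; simpl; intros r y Hi Hh; [contradiction|].
  destruct Hi as [<-|Hi].
  - destruct a; simpl in *; lia.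
  - specialize (IHl r y Hi Hh). lia.
Qed.

Lemma lsmax_in : forall l y A, In (y, A) l -> y <= lsmax l.
Proof.
  induction l; simpl; intros y A Hi; [contradiction|].
  destruct a as [z B]. destruct Hi as [Hi|Hi].
  - inversion Hi; subst; lia.
  - specialize (IHl y A Hi). lia.
Qed.

Lemma fresh : forall Q, exists y, ~ occurs y Q.
Proof.
  intros Q. exists (1 + (rsmax (rels Q) + lsmax (ant Q) + lsmax (suc Q))).
  intros [(r & Hr & Hh)|[(A & HA)|(A & HA)]].
  - pose proof (rsmax_in _ _ _ Hr Hh). lia.
  - pose proof (lsmax_in _ _ _ HA). lia.
  - pose proof (lsmax_in _ _ _ HA). lia.
Qed.

Theorem lemma3 : forall S : sequent,
  Acc (fun S2 S1 => step S1 S2) S /\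
  (forall S', clos_refl_trans sequent step S S' ->
     (forall S'', ~ step S' S'') -> label_saturated S').
Proof.
  intros S0. split.
  - apply (acc_all (1 + msr (suc S0))). lia.
  - intros S' _ Hns x A. destruct (fresh S') as [y Hy]. split; intro Hin;
    destruct (in_split _ _ Hin) as (l1 & l2 & Heq).
    + apply (Hns (Seq (RAt x y :: rels S') (ant S') ((y, A) :: l1 ++ l2))).
      left. exists x, y, A, (l1 ++ l2). simpl. repeat split; auto.
      rewrite Heq. apply Permutation_sym, Permutation_middle.
    + apply (Hns (Seq (SAt x y :: rels S') (ant S') ((y, A) :: l1 ++ l2))).
      right. exists x, y, A, (l1 ++ l2). simpl. repeat split; auto.
      rewrite Heq. apply Permutation_sym, Permutation_middle.
Qed.
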